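(* Let $\mathcal F,\mathcal G\subset 2^{[n]}$ be cross-intersecting families, i.e. $A\cap B\neq\emptyset$ for all $A\in\mathcal F$, $B\in\mathcal G$. Then $$|\mathcal F|+|\mathcal G|\le \max\{|\mathcal F^{\downarrow}|,|\mathcal G^{\downarrow}|\}.$$
   Context: $[n]=\{1,\dots,n\}$. For a family $\mathcal F$, $\mathcal F^{\downarrow}=\{G:\exists F\in\mathcal F,\ G\subset F\}$ is the down-set generated by $\mathcal F$. *)

(* Defs.v *)
From mathcomp Require Import all_boot.
Set Implicit Arguments. Unset Strict Implicit. Unset Printing Implicit Defensive.

(* Ground set [n] is modelled by 'I_n; families are {set {set 'I_n}}. *)

Definition cross_intersecting (n : nat) (F G : {set {set 'I_n}}) : Prop :=
  forall A B, A \in F -> B \in G -> A :&: B != set0.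

Definition downset (n : nat) (F : {set {set 'I_n}}) : {set {set 'I_n}} :=
  [set H : {set 'I_n} | [exists A in F, H \subset A]].

(* Main.v *)
Require Import Defs.
From mathcomp Require Import all_boot.
From mathcomp Require Import zify.
Set Implicit Arguments. Unset Strict Implicit. Unset Printing Implicit Defensive.

Lemma fft1 a0 a1 b0 b1 c0 c1 d0 d1 : a0*b0 <= c0*d0 -> a1*b1 <= c0*d0 -> a1*b0 <= c1*d0 -> a0*b1 <= c0*d1 -> (a0+a1)*(b0+b1) <= (c0+c1)*(d0+d1).
Proof.
move=> h1 h2 h3 h4.
have [P0|Ppos] := posnP (c0 * d0).
  have e1 : a0 * b0 = 0 by lia.
  have e2 : a1 * b1 = 0 by lia.
  nia.
rewrite -(leq_pmul2l Ppos).
have -> : (c0*d0) * ((c0+c1)*(d0+d1)) = (c0*d0 + c1*d0) * (c0*d0 + c0*d1) by nia.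
apply: (@leq_trans ((c0*d0 + a1*b0) * (c0*d0 + a0*b1))); last by apply: leq_mul; rewrite leq_add2l.
have key : (a0*b0)*(a1*b1) = (a1*b0)*(a0*b1) by nia.
rewrite (_ : (a0+a1)*(b0+b1) = a0*b0 + a1*b1 + a1*b0 + a0*b1); last by nia.
move: key h1 h2.
move: (c0*d0) (a0*b0) (a1*b1) (a1*b0) (a0*b1) => P p q r s key h1 h2.
have [u hu] : exists u, P = p + u by exists (P - p); lia.
have [v hv] : exists v, P = q + v by exists (P - q); lia.
subst P. nia.
Qed.

Section S.
Variable T : finType.
Implicit Types (F G : {set {set T}}) (A B C X : {set T}) (x : T).

Definition diffam F G := [set A :\: B | A in F, B in G].
Definition part0 x F := [set A in F | x \notin A].
Definition part1 x F := [set A :\ x | A in [set A in F | x \in A]].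

Lemma card_split x F : #|F| = #|part0 x F| + #|part1 x F|.
Proof.
rewrite /part1 card_in_imset; last first.
  move=> A1 A2; rewrite !inE => /andP[_ h1] /andP[_ h2] e.
  by rewrite -(setD1K h1) -(setD1K h2) e.
rewrite -(cardsID [set A : {set T} | x \in A] F) addnC; congr (_ + _); apply: eq_card => A0;
  by rewrite !inE andbC.
Qed.

Lemma part0_sub x X F : {in F, forall A, A \subset X} -> {in part0 x F, forall A, A \subset X :\ x}.
Proof.
move=> h A; rewrite inE => /andP[hA hx]; apply/subsetP => y hy.
by rewrite !inE (subsetP (h A hA)) // andbT; apply: contraNneq hx => <-.
Qed.

Lemma part1_sub x X F : {in F, forall A, A \subset X} -> {in part1 x F, forall A, A \subset X :\ x}.
Proof.
move=> h C /imsetP[A]; rewrite inE => /andP[hA hx] ->.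
by apply: setSD; apply: h.
Qed.

Lemma diffam_gt0 F G : 0 < #|F| -> 0 < #|G| -> 0 < #|diffam F G|.
Proof.
move=> /card_gt0P[A hA] /card_gt0P[B hB]; apply/card_gt0P; exists (A :\: B).
exact: imset2_f.
Qed.

Definition lo x F G := [set C in diffam F G | x \notin C].
Definition hi x F G := [set C in diffam F G | x \in C].

Lemma card_lohi x F G : #|diffam F G| = #|lo x F G| + #|hi x F G|.
Proof.
rewrite -(cardsID [set C : {set T} | x \in C] (diffam F G)) addnC; congr (_ + _); apply: eq_card => A0;
  by rewrite !inE andbC.
Qed.

Lemma lo00 x F G : #|diffam (part0 x F) (part0 x G)| <= #|lo x F G|.
Proof.
apply: subset_leq_card; apply/subsetP => C /imset2P[A B]; rewrite !inE.
move=> /andP[hA hxA] /andP[hB _] ->; rewrite !inE (negbTE hxA) andbF andbT.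
exact: imset2_f.
Qed.

Lemma lo01 x F G : #|diffam (part0 x F) (part1 x G)| <= #|lo x F G|.
Proof.
apply: subset_leq_card; apply/subsetP => C /imset2P[A B']; rewrite !inE.
move=> /andP[hA hxA] /imsetP[B]; rewrite inE => /andP[hB hxB] -> ->.
have e : A :\: (B :\ x) = A :\: B.
  apply/setP => y; rewrite !inE; case: eqP => [->|_] //=.
  by rewrite (negbTE hxA) andbF.
by rewrite e !inE (negbTE hxA) andbF andbT; exact: imset2_f.
Qed.

Lemma lo11 x F G : #|diffam (part1 x F) (part1 x G)| <= #|lo x F G|.
Proof.
apply: subset_leq_card; apply/subsetP => C /imset2P[A' B'].
move=> /imsetP[A]; rewrite inE => /andP[hA hxA] ->.
move=> /imsetP[B]; rewrite inE => /andP[hB hxB] -> ->.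
have e : (A :\ x) :\: (B :\ x) = A :\: B.
  apply/setP => y; rewrite !inE; case: eqP => [->|_] //=.
  by rewrite hxB /= ?andbF.
by rewrite e !inE hxB andbT /=; exact: imset2_f.
Qed.

Lemma hi10 x F G : #|diffam (part1 x F) (part0 x G)| <= #|hi x F G|.
Proof.
rewrite -(@card_in_imset _ _ (fun C : {set T} => x |: C)); last first.
  move=> C1 C2 /imset2P[A1' B1 /imsetP[A1 _ ->] _ ->] /imset2P[A2' B2 /imsetP[A2 _ ->] _ ->] e.
  have n1 : x \notin (A1 :\ x) :\: B1 by rewrite !inE eqxx /= ?andbF.
  have n2 : x \notin (A2 :\ x) :\: B2 by rewrite !inE eqxx /= ?andbF.
  by rewrite -(setU1K n1) e setU1K.
apply: subset_leq_card; apply/subsetP => C /imsetP[C' /imset2P[A' B]] .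
move=> /imsetP[A]; rewrite inE => /andP[hA hxA] ->.
rewrite inE => /andP[hB hxB] -> ->.
have e : x |: ((A :\ x) :\: B) = A :\: B.
  apply/setP => y; rewrite !inE; case: eqP => [->|_] //=.
  by rewrite hxA hxB.
by rewrite e !inE hxA hxB /= andbT; exact: imset2_f.
Qed.


Lemma diff_prod k : forall X, #|X| = k -> forall F G,
  {in F, forall A, A \subset X} -> {in G, forall B, B \subset X} ->
  #|F| * #|G| <= #|diffam F G| * #|diffam G F|.
Proof.
elim: k => [|k IH] X hX F G hF hG.
  have X0 : X = set0 by apply/eqP; rewrite -cards_eq0 hX.
  have b : forall H : {set {set T}}, {in H, forall A, A \subset X} -> #|H| <= 1.
    move=> H hH; rewrite -(cards1 (set0 : {set T})); apply: subset_leq_card.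
    apply/subsetP => A hA; rewrite inE; have := hH A hA; by rewrite X0 subset0.
  have bF := b F hF; have bG := b G hG.
  have [F0|Fp] := posnP #|F|; first by rewrite F0.
  have [G0|Gp] := posnP #|G|; first by rewrite G0 muln0.
  have d1 := diffam_gt0 Fp Gp; have d2 := diffam_gt0 Gp Fp.
  nia.
have [x hx] : exists x, x \in X by apply/card_gt0P; rewrite hX.
have hX' : #|X :\ x| = k by move: hX; rewrite (cardsD1 x X) hx add1n => -[].
have IH' := IH _ hX'.
have s0F := part0_sub (x:=x) hF; have s1F := part1_sub (x:=x) hF.
have s0G := part0_sub (x:=x) hG; have s1G := part1_sub (x:=x) hG.
rewrite (card_split x F) (card_split x G) (card_lohi x F G) (card_lohi x G F).
apply: fft1.
- apply: leq_trans (IH' _ _ s0F s0G) _; apply: leq_mul; [exact: lo00 | exact: lo00].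
- apply: leq_trans (IH' _ _ s1F s1G) _; apply: leq_mul; [exact: lo11 | exact: lo11].
- apply: leq_trans (IH' _ _ s1F s0G) _; apply: leq_mul; [exact: hi10 | exact: lo01].
- apply: leq_trans (IH' _ _ s0F s1G) _; apply: leq_mul; [exact: lo01 | exact: hi10].
Qed.
End S.

Lemma down_bound (n : nat) (F G : {set {set 'I_n}}) :
  (forall A B, A \in F -> B \in G -> A :&: B != set0) ->
  #|F| + #|diffam F G| <= #|downset F|.
Proof.
move=> h.
have disj : F :&: diffam F G = set0.
  apply/setP => C; rewrite !inE; apply/negbTE/negP => /andP[hC /imset2P[A B hA hB eC]].
  have := h _ _ hC hB; rewrite eC; apply/negP; rewrite negbK.
  apply/eqP/setP => y; rewrite !inE; by case: (y \in B); rewrite ?andbF.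
have := cardsU F (diffam F G); rewrite disj cards0 subn0 => <-.
apply: subset_leq_card; apply/subsetP => C; rewrite !inE => /orP[hC|].
  by apply/existsP; exists C; rewrite hC subxx.
move=> /imset2P[A B hA hB ->]; apply/existsP; exists A; by rewrite hA subsetDl.
Qed.

Theorem theorem1p6 (n : nat) (F G : {set {set 'I_n}}) :
  cross_intersecting F G ->
  #|F| + #|G| <= maxn #|downset F| #|downset G|.
Proof.
move=> h.
have h' : forall A B, A \in G -> B \in F -> A :&: B != set0.
  by move=> A B hA hB; rewrite setIC; apply: h.
have P := @diff_prod _ _ [set: 'I_n] erefl F G (fun A _ => subsetT A) (fun A _ => subsetT A).
have bF := down_bound h; have bG := down_bound h'.
have [sG|sG] := leqP #|G| #|diffam F G|.
  apply: leq_trans (leq_maxl _ _); apply: leq_trans bF; by rewrite leq_add2l.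
have tF : #|F| <= #|diffam G F|.
  rewrite leqNgt; apply/negP => tF.
  have := leq_trans (ltn_mul sG tF) (leq_trans (eq_leq (mulnC _ _)) P); by rewrite ltnn.
apply: leq_trans (leq_maxr _ _); apply: leq_trans bG; by rewrite addnC leq_add2l.
Qed.
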